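(* Consider a network as described in the context that is cooperative and large enough. Then for every initial state $\mathbf x(0)$ with $S_i(x_i(0))\in[0,\theta_i)$ for all $i$, the grand coalition is exhibited infinitely many times in the future. That is, there are infinitely many spiking instants $t_n$ with $I(t_n)=\{1,\dots,m\}$.
   Context: Network model. Fix an integer $m\ge 2$ (the number of units, or cells). For each $i\in\{1,\dots,m\}$ the following data are given. - $X_i$ is a compact finite-dimensional smooth manifold. - $f_i$ is a continuous vector field on $X_i$. - $S_i:X_i\to\mathbb R$ is a $C^1$ function, called the satisfaction level. - $\theta_i>0$ is a constant, called the goal. These are required to satisfy: there is $v_i>0$ with $\nabla S_i(x)\cdot f_i(x)>v_i$ for every $x\in X_i$ with $S_i(x)<\theta_i$. Real interaction weights $\Delta_{ij}$ are given for $i\ne j$. The global state $\mathbf x(t)=(x_1(t),\dots,x_m(t))\in\prod_i X_i$, $t\ge 0$, evolves as follows. Spiking instants $0\le t_0<t_1<\cdots$ are the instants at which at least one cell spikes. Between consecutive spiking instants each $x_i$ evolves independently by $dx_i/dt=f_i(x_i)$. At an instant $t_n$, write $S_j(x_j(t_n^-))=\lim_{t\to t_n^-}S_j(x_j(t))$. The coalition is $I(t_n)=\bigcup_{p\ge 0}I_p(t_n)$, where: - $I_0(t_n)$ is the set of cells $i$ with $S_i(x_i(t_n^-))\ge\theta_i$; - for $p\ge1$, $I_p(t_n)$ is the set of cells $j\notin\bigcup_{k<p}I_k(t_n)$ with $S_j(x_j(t_n^-))+\sum_{k<p}\sum_{i\in I_k(t_n)}\Delta_{ij}\ge\theta_j$.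 The spiking instants are exactly the instants with $I_0(t_n)\neq\emptyset$, and the cells in $I(t_n)$ are said to spike at $t_n$. At $t_n$ the state jumps as follows: - for $j\in I(t_n)$, $x_j(t_n)$ is a point with $S_j(x_j(t_n))=0$; - for $j\notin I(t_n)$, $x_j(t_n)$ is a point with $S_j(x_j(t_n))=S_j(x_j(t_n^-))+\sum_{i\in I(t_n),\,i\ne j}\Delta_{ij}$. Initial states are assumed to satisfy $S_i(x_i(0))\in[0,\theta_i)$ for all $i$. The network is cooperative if $\Delta_{ij}\ge 0$ for all $i\ne j$. A cooperative network is large enough if $\sqrt m\ge 1+\frac{\max_i\theta_i}{\min_{i\ne j}\Delta_{ij}}$; in particular this requires $\Delta_{ij}>0$ for all $i\ne j$. The grand coalition is exhibited at $t_n$ if $I(t_n)=\{1,\dots,m\}$. *)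

(* Defs.v *)
From Stdlib Require Import Bool Reals Lra List Arith ClassicalDescription.
Import ListNotations.
Open Scope R_scope.
Open Scope bool_scope.

Definition rsum (n : nat) (f : nat -> R) : R :=
  fold_right Rplus 0 (map f (seq 0 n)).

Definition Rleb (a b : R) : bool := if Rle_dec a b then true else false.

(* max_i theta_i over i < m (meaningful for m >= 1) *)
Definition max_theta (m : nat) (theta : nat -> R) : R :=
  fold_right Rmax (theta 0%nat) (map theta (seq 0 m)).

(* min_{i <> j} Delta_ij over i, j < m (meaningful for m >= 2) *)
Definition min_Delta (m : nat) (Delta : nat -> nat -> R) : R :=
  fold_right Rmin (Delta 0%nat 1%nat)
    (flat_map (fun i => map (fun j => Delta i j)
                 (filter (fun j => negb (Nat.eqb j i)) (seq 0 m)))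
              (seq 0 m)).

Definition cooperative (m : nat) (Delta : nat -> nat -> R) : Prop :=
  forall i j, (i < m)%nat -> (j < m)%nat -> i <> j -> 0 <= Delta i j.

(* "large enough": sqrt m >= 1 + max theta / min Delta, which in particular
   requires min Delta > 0 (stated explicitly, as in the paper). *)
Definition large_enough (m : nat) (theta : nat -> R) (Delta : nat -> nat -> R) : Prop :=
  0 < min_Delta m Delta /\
  sqrt (INR m) >= 1 + max_theta m theta / min_Delta m Delta.

(* Layers I_p of the coalition, given the pre-spike satisfaction levels
   l j = S_j(x_j(t_n^-)).  layer p j = true  iff  j \in I_p(t_n). *)
Fixpoint layers (m : nat) (theta : nat -> R) (Delta : nat -> nat -> R)
         (l : nat -> R) (p : nat) : list (nat -> bool) :=
  match p with
  | O => [fun j => Nat.ltb j m && Rleb (theta j) (l j)]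
  | S q =>
      let prev := layers m theta Delta l q in   (* [I_0; ...; I_q] *)
      prev ++
      [fun j =>
         Nat.ltb j m
         && negb (existsb (fun Ik : nat -> bool => Ik j) prev)
         && Rleb (theta j)
              (l j + fold_right Rplus 0
                       (map (fun Ik : nat -> bool => rsum m (fun i => if Ik i then Delta i j else 0))
                            prev))]
  end.

Definition layer (m : nat) (theta : nat -> R) (Delta : nat -> nat -> R)
         (l : nat -> R) (p j : nat) : bool :=
  nth p (layers m theta Delta l p) (fun _ => false) j.

Definition in_coalition (m : nat) (theta : nat -> R) (Delta : nat -> nat -> R)
           (l : nat -> R) (j : nat) : Prop :=
  exists p, layer m theta Delta l p j = true.

Definition left_limit (f : R -> R) (t l : R) : Prop :=
  forall eps, eps > 0 -> exists d, d > 0 /\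
    forall u, t - d < u < t -> Rabs (f u - l) < eps.

Definition right_continuous (f : R -> R) (a : R) : Prop :=
  forall eps, eps > 0 -> exists d, d > 0 /\
    forall u, a < u < a + d -> Rabs (f u - f a) < eps.

Definition pre_levels (m : nat) (s : nat -> R -> R) (t : R) (l : nat -> R) : Prop :=
  forall i, (i < m)%nat -> left_limit (s i) t (l i).

Definition jump_rule (m : nat) (theta : nat -> R) (Delta : nat -> nat -> R)
           (l : nat -> R) (s_after : nat -> R) : Prop :=
  forall j, (j < m)%nat ->
    (in_coalition m theta Delta l j -> s_after j = 0) /\
    (~ in_coalition m theta Delta l j ->
       s_after j = l j + rsum m (fun i =>
          if excluded_middle_informative (in_coalition m theta Delta l i /\ i <> j)
          then Delta i j else 0)).

(* An evolution of the network (as seen through the satisfaction levels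
   s i t = S_i(x_i(t)), with L_i = grad S_i . f_i the Lie derivative). *)
Definition is_evolution (m : nat) (X : nat -> Type)
    (S : forall i, X i -> R) (L : forall i, X i -> R)
    (theta : nat -> R) (Delta : nat -> nat -> R)
    (x : forall i, R -> X i) (spk : R -> Prop) : Prop :=
  let s := fun i t => S i (x i t) in
  (* spiking instants are positive and form a discrete sequence t0 < t1 < ... *)
  (forall t, spk t -> 0 < t) /\
  (forall T, exists ts : list R, forall t, spk t -> t <= T -> In t ts) /\
  (* free evolution dx_i/dt = f_i(x_i) between consecutive spiking instants,
     starting from the (post-jump) state at the left end *)
  (forall a b i, 0 <= a -> a < b -> (i < m)%nat ->
     (forall t, a < t < b -> ~ spk t) ->
     right_continuous (s i) a /\
     (forall t, a < t < b -> derivable_pt_lim (s i) t (L i (x i t)))) /\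
  (forall t i, 0 < t -> (i < m)%nat -> exists li, left_limit (s i) t li) /\
  (* spiking instants are exactly the instants with I_0 nonempty *)
  (forall t l, 0 < t -> pre_levels m s t l ->
     (spk t <-> exists i, (i < m)%nat /\ theta i <= l i)) /\
  (forall t l, spk t -> pre_levels m s t l ->
     jump_rule m theta Delta l (fun j => s j t)).

(* Main.v *)
Require Import Defs.
From Stdlib Require Import Reals Lra List Arith Lia ClassicalDescription Classical.
From Stdlib Require ClassicalEpsilon.
Import ListNotations.
Open Scope R_scope.

Lemma rlist_min (l : list R) (P : R -> Prop) :
  (exists x, In x l /\ P x) -> exists y, In y l /\ P y /\ forall z, In z l -> P z -> y <= z.
Proof.
  induction l as [|a l IH]; intros [x [Hx HP]]; [destruct Hx|].
  destruct (classic (exists x, In x l /\ P x)) as [Hex|Hn].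
  - destruct (IH Hex) as [y [Hy [HPy Hmin]]].
    destruct (classic (P a /\ a <= y)) as [[Pa Hay]|Hna].
    + exists a; split; [left; auto|split; auto].
      intros z [<-|Hz] Pz; [lra|]. specialize (Hmin z Hz Pz); lra.
    + exists y; split; [right; auto|split; auto].
      intros z [<-|Hz] Pz; [|auto]. apply Rnot_lt_le; intro; apply Hna; split; auto; lra.
  - destruct Hx as [<-|Hx]; [|exfalso; apply Hn; eauto].
    exists a; split; [left; auto|split; auto].
    intros z [<-|Hz] Pz; [lra|exfalso; apply Hn; eauto].
Qed.

Lemma rlist_max (l : list R) (P : R -> Prop) :
  (exists x, In x l /\ P x) -> exists y, In y l /\ P y /\ forall z, In z l -> P z -> z <= y.
Proof.
  intro H. destruct (rlist_min (map Ropp l) (fun u => P (- u))) as [y [Hy [Py Hm]]].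
  - destruct H as [x [Hx Px]]. exists (-x). split; [apply in_map; auto|]. rewrite Ropp_involutive; auto.
  - apply in_map_iff in Hy. destruct Hy as [y' [<- Hy']].
    exists y'. split; auto. split; [rewrite Ropp_involutive in Py; auto|].
    intros z Hz Pz. assert (Hh := Hm (-z) (in_map _ _ _ Hz)). rewrite Ropp_involutive in Hh.
    specialize (Hh Pz). lra.
Qed.

Lemma rsum_S n f : rsum (S n) f = rsum n f + f n.
Proof.
  unfold rsum. rewrite seq_S, map_app, fold_right_app. simpl.
  generalize (map f (seq 0 n)). intro l. induction l; simpl; lra.
Qed.

Lemma rsum_le n f g : (forall i, (i < n)%nat -> f i <= g i) -> rsum n f <= rsum n g.
Proof.
  induction n; intros H. unfold rsum; simpl; lra.
  rewrite !rsum_S. assert (H1 := H n ltac:(lia)). assert (rsum n f <= rsum n g) by (apply IHn; intros; apply H; lia). lra.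
Qed.

Lemma rsum_plus n f g : rsum n (fun i => f i + g i) = rsum n f + rsum n g.
Proof. induction n. unfold rsum; simpl; lra. rewrite !rsum_S, IHn. lra. Qed.

Lemma rsum_scal n a f : rsum n (fun i => a * f i) = a * rsum n f.
Proof. induction n. unfold rsum; simpl; lra. rewrite !rsum_S, IHn. lra. Qed.

Lemma rsum_const n a : rsum n (fun _ => a) = a * INR n.
Proof. induction n. unfold rsum; simpl; lra. rewrite !rsum_S, IHn, S_INR. lra. Qed.

Definition indP (P : nat -> Prop) (i : nat) : R :=
  if excluded_middle_informative (P i) then 1 else 0.

Lemma rsum_if n (P : nat -> Prop) A B :
  rsum n (fun j => if excluded_middle_informative (P j) then A else B)
  = A * rsum n (indP P) + B * (INR n - rsum n (indP P)).
Proof.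
  induction n. unfold rsum; simpl; lra.
  rewrite !rsum_S, IHn, S_INR. unfold indP. destruct (excluded_middle_informative (P n)); lra.
Qed.

Lemma rsum_ind_ge1 n (P : nat -> Prop) : (exists i, (i < n)%nat /\ P i) -> 1 <= rsum n (indP P).
Proof.
  induction n; intros [i [Hi Pi]]; [lia|]. rewrite rsum_S.
  assert (0 <= rsum n (indP P)).
  { clear. induction n. unfold rsum; simpl; lra. rewrite rsum_S. unfold indP at 2.
    destruct (excluded_middle_informative (P n)); lra. }
  destruct (Nat.eq_dec i n) as [->|Hne].
  - unfold indP at 2. destruct (excluded_middle_informative (P n)); [lra|contradiction].
  - assert (1 <= rsum n (indP P)) by (apply IHn; exists i; split; auto; lia).
    unfold indP at 2. destruct (excluded_middle_informative (P n)); lra.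
Qed.

Lemma fold_max_ge (l : list R) a x : In x l -> x <= fold_right Rmax a l.
Proof.
  induction l; simpl; intros H; [destruct H|]. destruct H as [<-|H].
  apply Rmax_l. eapply Rle_trans; [apply IHl; auto|apply Rmax_r].
Qed.

Lemma fold_min_le (l : list R) a x : In x l -> fold_right Rmin a l <= x.
Proof.
  induction l; simpl; intros H; [destruct H|]. destruct H as [<-|H].
  apply Rmin_l. eapply Rle_trans; [apply Rmin_r|apply IHl; auto].
Qed.

Lemma max_theta_ge m theta i : (i < m)%nat -> theta i <= max_theta m theta.
Proof. intro. apply fold_max_ge. apply in_map. apply in_seq. lia. Qed.

Lemma min_Delta_le m Delta i j : (i < m)%nat -> (j < m)%nat -> i <> j -> min_Delta m Delta <= Delta i j.
Proof.
  intros. apply fold_min_le. apply in_flat_map. exists i. split; [apply in_seq; lia|].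
  apply in_map. apply filter_In. split; [apply in_seq; lia|].
  destruct (Nat.eqb j i) eqn:E; [apply Nat.eqb_eq in E; lia|reflexivity].
Qed.

Lemma cont_left_limit f t : continuity_pt f t -> left_limit f t (f t).
Proof.
  intros H eps He. destruct (H eps He) as [d [Hd Hc]]. exists d. split; auto.
  intros u Hu. apply (Hc u). split. split; [exact I|lra].
  simpl. unfold R_dist. rewrite Rabs_left; lra.
Qed.

Lemma dlim_cont f t l : derivable_pt_lim f t l -> continuity_pt f t.
Proof. intro H. apply (derivable_continuous_pt f t (exist _ l H)). Qed.

Definition Hdyn (m : nat) (s D : nat -> R -> R) (spk : R -> Prop) : Prop :=
  forall a b i, 0 <= a -> a < b -> (i < m)%nat -> (forall t, a < t < b -> ~ spk t) ->
    right_continuous (s i) a /\ (forall t, a < t < b -> derivable_pt_lim (s i) t (D i t)).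
Definition Hspk (m : nat) (theta : nat -> R) (s : nat -> R -> R) (spk : R -> Prop) : Prop :=
  forall t l, 0 < t -> pre_levels m s t l -> (spk t <-> exists i, (i < m)%nat /\ theta i <= l i).
Definition HLv (m : nat) (theta v : nat -> R) (s D : nat -> R -> R) : Prop :=
  forall i t, (i < m)%nat -> s i t < theta i -> D i t > v i.

Lemma below m theta s D spk a b i u :
  Hdyn m s D spk -> Hspk m theta s spk ->
  0 <= a -> a < b -> (i < m)%nat -> (forall t, a < t < b -> ~ spk t) -> a < u < b ->
  s i u < theta i.
Proof.
  intros Hd Hs Ha Hab Hi Hn Hu. apply Rnot_le_lt; intro Hle.
  apply (Hn u Hu). apply (proj2 (Hs u (fun k => s k u) ltac:(lra) ltac:(
    intros k Hk; apply cont_left_limit; apply dlim_cont with (D k u);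
    apply (proj2 (Hd a b k Ha Hab Hk Hn)); auto))).
  exists i; auto.
Qed.

Lemma incr m theta v s D spk a b i w u :
  Hdyn m s D spk -> Hspk m theta s spk -> HLv m theta v s D ->
  0 <= a -> a < b -> (i < m)%nat -> (forall t, a < t < b -> ~ spk t) -> a < w -> w < u -> u < b ->
  s i u - s i w >= v i * (u - w).
Proof.
  intros Hd Hs Hl Ha Hab Hi Hn Hw Hwu Hub.
  destruct (MVT_cor2 (s i) (D i) w u Hwu) as [c [Hc Hc2]].
  { intros c Hc. apply (proj2 (Hd a b i Ha Hab Hi Hn)). lra. }
  assert (D i c > v i). { apply Hl; auto. apply (below m theta s D spk a b i c); auto; lra. }
  rewrite Hc. nra.
Qed.

Lemma ge_a m theta v s D spk a b i u :
  Hdyn m s D spk -> Hspk m theta s spk -> HLv m theta v s D -> 0 < v i ->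
  0 <= a -> a < b -> (i < m)%nat -> (forall t, a < t < b -> ~ spk t) -> a < u < b ->
  s i a <= s i u.
Proof.
  intros Hd Hs Hl Hv Ha Hab Hi Hn Hu. apply Rnot_lt_le; intro Hlt.
  destruct (proj1 (Hd a b i Ha Hab Hi Hn) (s i a - s i u) ltac:(lra)) as [d [Hd0 Hc]].
  set (w := a + Rmin d (u - a) / 2).
  assert (Hm1 := Rmin_l d (u - a)). assert (Hm2 := Rmin_r d (u - a)).
  assert (0 < Rmin d (u - a)) by (apply Rmin_glb_lt; lra).
  specialize (Hc w ltac:(unfold w; lra)).
  assert (H2 := incr m theta v s D spk a b i w u Hd Hs Hl Ha Hab Hi Hn ltac:(unfold w; lra) ltac:(unfold w; lra) ltac:(lra)).
  assert (v i * (u - w) > 0) by (apply Rmult_lt_0_compat; unfold w in *; lra).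
  apply Rabs_def2 in Hc. lra.
Qed.

Lemma leftlim_bounds m theta v s D spk a b i l :
  Hdyn m s D spk -> Hspk m theta s spk -> HLv m theta v s D -> 0 < v i ->
  0 <= a -> a < b -> (i < m)%nat -> (forall t, a < t < b -> ~ spk t) ->
  left_limit (s i) b l -> s i a <= l <= theta i.
Proof.
  intros Hd Hs Hl Hv Ha Hab Hi Hn HL. split; apply Rnot_lt_le; intro Hlt.
  - destruct (HL (s i a - l) ltac:(lra)) as [d [Hd0 Hc]].
    assert (Hm1 := Rmin_l d (b - a)). assert (Hm2 := Rmin_r d (b - a)).
    assert (0 < Rmin d (b - a)) by (apply Rmin_glb_lt; lra).
    set (u := b - Rmin d (b - a) / 2).
    specialize (Hc u ltac:(unfold u; lra)). apply Rabs_def2 in Hc.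
    assert (s i a <= s i u) by (apply (ge_a m theta v s D spk a b i u); auto; unfold u; lra). lra.
  - destruct (HL (l - theta i) ltac:(lra)) as [d [Hd0 Hc]].
    assert (Hm1 := Rmin_l d (b - a)). assert (Hm2 := Rmin_r d (b - a)).
    assert (0 < Rmin d (b - a)) by (apply Rmin_glb_lt; lra).
    set (u := b - Rmin d (b - a) / 2).
    specialize (Hc u ltac:(unfold u; lra)). apply Rabs_def2 in Hc.
    assert (s i u < theta i) by (apply (below m theta s D spk a b i u); auto; unfold u; lra). lra.
Qed.

Lemma infinite_spk m theta v s D spk :
  Hdyn m s D spk -> Hspk m theta s spk -> HLv m theta v s D -> (0 < m)%nat -> 0 < v 0%nat ->
  forall T, exists t, T < t /\ spk t.
Proof.
  intros Hd Hs Hl Hm Hv T. apply NNPP; intro Hno.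
  set (a := Rmax T 0).
  assert (Hn : forall b t, a < t < b -> ~ spk t).
  { intros b t Ht Hsp. apply Hno. exists t. split; auto. unfold a in Ht. assert (H := Rmax_l T 0). lra. }
  assert (Ha : 0 <= a) by apply Rmax_r.
  set (w := a + 1).
  set (u := w + Rabs (theta 0%nat - s 0%nat w) / v 0%nat + 1).
  assert (Hq : 0 <= Rabs (theta 0%nat - s 0%nat w) / v 0%nat) by (unfold Rdiv; apply Rmult_le_pos; [apply Rabs_pos|apply Rlt_le, Rinv_0_lt_compat; lra]).
  assert (H1 := incr m theta v s D spk a (u + 1) 0%nat w u Hd Hs Hl Ha ltac:(unfold u, w in *; lra) Hm (Hn (u+1))
     ltac:(unfold w; lra) ltac:(unfold u; lra) ltac:(lra)).
  assert (H2 := below m theta s D spk a (u + 1) 0%nat u Hd Hs Ha ltac:(unfold u, w in *; lra) Hm (Hn (u+1)) ltac:(unfold u, w in *; lra)).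
  assert (Hequ : v 0%nat * (u - w) = Rabs (theta 0%nat - s 0%nat w) + v 0%nat).
  { unfold u. field_simplify; [|lra]. reflexivity. }
  assert (H3 := Rle_abs (theta 0%nat - s 0%nat w)). lra.
Qed.

Lemma next_spk (spk : R -> Prop) :
  (forall T, exists ts : list R, forall t, spk t -> t <= T -> In t ts) ->
  (forall T, exists t, T < t /\ spk t) ->
  forall t, exists t', t < t' /\ spk t' /\ forall u, t < u < t' -> ~ spk u.
Proof.
  intros Hdisc Hinf t. destruct (Hinf t) as [t1 [Ht1 Hs1]].
  destruct (Hdisc t1) as [ts Hts].
  destruct (rlist_min ts (fun u => t < u /\ spk u)) as [y [Hy [[Hty Hsy] Hmin]]].
  { exists t1. split; auto. apply Hts; auto; lra. }
  exists y. split; auto. split; auto. intros u Hu Hsu.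
  assert (u <= t1). { apply Rnot_lt_le; intro. assert (y <= t1) by (apply Hmin; auto; apply Hts; auto; lra). lra. }
  assert (y <= u) by (apply Hmin; auto; split; [lra|auto]). lra.
Qed.

Lemma prev_spk (spk : R -> Prop) :
  (forall T, exists ts : list R, forall t, spk t -> t <= T -> In t ts) ->
  forall t, (forall u, 0 < u < t -> ~ spk u) \/
    exists p, 0 < p < t /\ spk p /\ forall u, p < u < t -> ~ spk u.
Proof.
  intros Hdisc t. destruct (classic (exists u, 0 < u < t /\ spk u)) as [He|Hn].
  - right. destruct (Hdisc t) as [ts Hts].
    destruct (rlist_max ts (fun u => 0 < u < t /\ spk u)) as [y [Hy [[Hty Hsy] Hmax]]].
    { destruct He as [u [Hu Hsu]]. exists u. split; auto. apply Hts; auto; lra. }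
    exists y. split; auto. split; auto. intros u Hu Hsu.
    assert (u <= y) by (apply Hmax; [apply Hts; auto; lra|split; [lra|auto]]). lra.
  - left. intros u Hu Hsu. apply Hn. eauto.
Qed.

Theorem theorem1
  (m : nat) (X : nat -> Type)
  (S : forall i, X i -> R)     (* satisfaction levels S_i *)
  (L : forall i, X i -> R)     (* L_i x = grad S_i(x) . f_i(x) *)
  (theta v : nat -> R) (Delta : nat -> nat -> R)
  (x : forall i, R -> X i) (spk : R -> Prop) :
  (2 <= m)%nat ->
  (forall i, (i < m)%nat -> 0 < theta i) ->
  (forall i, (i < m)%nat -> 0 < v i) ->
  (forall i (y : X i), (i < m)%nat -> S i y < theta i -> L i y > v i) ->
  cooperative m Delta ->
  large_enough m theta Delta ->
  (forall i, (i < m)%nat -> 0 <= S i (x i 0) < theta i) ->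
  is_evolution m X S L theta Delta x spk ->
  forall T : R, exists t, T < t /\ spk t /\
    exists l : nat -> R,
      pre_levels m (fun i u => S i (x i u)) t l /\
      forall j, (j < m)%nat -> in_coalition m theta Delta l j.
Proof.
  intros Hm Hth Hv HLi Hcoop Hlarge Hinit Hev T.
  set (s := fun i u => S i (x i u)).
  set (D := fun i u => L i (x i u)).
  destruct Hev as [Hpos [Hdisc [Hd' [Hll [Hs' Hjump]]]]].
  assert (Hd : Hdyn m s D spk) by exact Hd'.
  assert (Hs : Hspk m theta s spk) by exact Hs'.
  assert (Hl : HLv m theta v s D) by (intros i t Hi Ht; apply HLi; auto).
  assert (Hjmp : forall t l, spk t -> pre_levels m s t l -> jump_rule m theta Delta l (fun j => s j t)) by exact Hjump.
  assert (Hinf := infinite_spk m theta v s D spk Hd Hs Hl ltac:(lia) (Hv 0%nat ltac:(lia))).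
  assert (Hnext := next_spk spk Hdisc Hinf).
  set (pl := fun t i => match excluded_middle_informative (exists li, left_limit (s i) t li) with
                        | left h => proj1_sig (ClassicalEpsilon.constructive_indefinite_description _ h)
                        | right _ => 0 end).
  assert (Hpl : forall t, 0 < t -> pre_levels m s t (pl t)).
  { intros t Ht i Hi. unfold pl. destruct (excluded_middle_informative _) as [h|h].
    - exact (proj2_sig (ClassicalEpsilon.constructive_indefinite_description _ h)).
    - exfalso. apply h. apply (Hll t i Ht Hi). }
  assert (F2 : forall t i, spk t -> (i < m)%nat -> pl t i <= theta i).
  { intros t i Ht Hi. assert (Htp := Hpos t Ht).
    destruct (prev_spk spk Hdisc t) as [Hn|[p [Hp [Hsp Hn]]]].
    - apply (leftlim_bounds m theta v s D spk 0 t i (pl t i) Hd Hs Hl (Hv i Hi) ltac:(lra) Htp Hi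
        ltac:(intros u Hu Hsu; apply (Hn u); auto; lra) (Hpl t Htp i Hi)).
    - apply (leftlim_bounds m theta v s D spk p t i (pl t i) Hd Hs Hl (Hv i Hi) ltac:(lra) ltac:(lra) Hi
        Hn (Hpl t Htp i Hi)). }
  assert (F3 : forall t, spk t -> (forall i, (i < m)%nat -> 0 <= pl t i) -> forall j, (j < m)%nat -> 0 <= s j t).
  { intros t Ht Hnn j Hj. destruct (Hjmp t (pl t) Ht (Hpl t (Hpos t Ht)) j Hj) as [H1 H2].
    destruct (classic (in_coalition m theta Delta (pl t) j)) as [Hc|Hc].
    - rewrite (H1 Hc). lra.
    - rewrite (H2 Hc). assert (0 <= rsum m (fun i =>
          if excluded_middle_informative (in_coalition m theta Delta (pl t) i /\ i <> j)
          then Delta i j else 0)).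
      { replace 0 with (rsum m (fun _ => 0)) at 1 by (rewrite rsum_const; lra).
        apply rsum_le. intros i Hi. destruct (excluded_middle_informative _) as [[_ Hij]|_]; [|lra].
        unfold cooperative in Hcoop. apply Hcoop; auto. }
      specialize (Hnn j Hj). lra. }
  assert (F1 : forall t i, spk t -> (i < m)%nat -> 0 <= pl t i).
  { intros t i Ht Hi. apply Rnot_lt_le. intro Hneg.
    destruct (Hdisc t) as [ts Hts].
    destruct (rlist_min ts (fun u => spk u /\ exists i, (i < m)%nat /\ pl u i < 0)) as [y [Hy [[Hsy [k [Hk Hyk]]] Hmin]]].
    { exists t. split; [apply Hts; auto; lra|]. split; auto. eauto. }
    assert (Hyp := Hpos y Hsy).
    destruct (prev_spk spk Hdisc y) as [Hn|[p [Hp [Hsp Hn]]]].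
    - assert (H := leftlim_bounds m theta v s D spk 0 y k (pl y k) Hd Hs Hl (Hv k Hk) ltac:(lra) Hyp Hk
        ltac:(intros u Hu Hsu; apply (Hn u); auto; lra) (Hpl y Hyp k Hk)).
      assert (H0 := Hinit k Hk). unfold s in H. simpl in H. lra.
    - assert (Hpnn : forall i, (i < m)%nat -> 0 <= pl p i).
      { intros i' Hi'. apply Rnot_lt_le. intro Hlt.
        assert (Hyt : y <= t).
        { destruct (Rle_dec y t); auto. exfalso.
          assert (y <= t) by (apply Hmin; [apply Hts; auto; lra|split; eauto]). lra. }
        assert (y <= p) by (apply Hmin; [apply Hts; auto; lra|split; eauto]). lra. }
      assert (H := leftlim_bounds m theta v s D spk p y k (pl y k) Hd Hs Hl (Hv k Hk) ltac:(lra) ltac:(lra) Hk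
        Hn (Hpl y Hyp k Hk)).
      assert (H0 := F3 p Hsp Hpnn k Hk). lra. }

  set (Dm := min_Delta m Delta). set (Th := max_theta m theta).
  destruct Hlarge as [HD Hsq]. fold Dm in HD, Hsq. fold Th in Hsq.
  assert (HTh : 0 < Th) by (apply Rlt_le_trans with (theta 0%nat); [apply Hth; lia|apply max_theta_ge; lia]).
  set (delta := INR m * Dm - 2 * Th).
  assert (Hdelta : 0 < delta).
  { unfold delta. set (q := sqrt (INR m)).
    assert (Hq2 : q * q = INR m) by (apply sqrt_sqrt; apply pos_INR).
    set (K := Th / Dm).
    assert (HK : 0 < K) by (unfold K; apply Rdiv_lt_0_compat; auto).
    assert (HThK : Th = K * Dm) by (unfold K; field; lra).
    assert (q >= 1 + K) by exact Hsq.
    assert (INR m > 2 * K) by nra.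
    rewrite HThK. nra. }
  apply NNPP. intro Hno.
  assert (Hstep : forall t, T < t -> spk t -> exists t', T < t' /\ spk t' /\ rsum m (pl t) + delta <= rsum m (pl t')).
  { intros t HTt Ht. destruct (Hnext t) as [t' [Htt' [Ht' Hn]]].
    exists t'. split; [lra|]. split; auto.
    assert (Htp := Hpos t Ht).
    set (C := in_coalition m theta Delta (pl t)).
    assert (Hj0 : exists j0, (j0 < m)%nat /\ ~ C j0).
    { apply NNPP. intro Hn0. apply Hno. exists t. split; auto. split; auto.
      exists (pl t). split; [apply Hpl; auto|].
      intros j Hj. apply NNPP. intro Hcj. apply Hn0. exists j; auto. }
    destruct Hj0 as [j0 [Hj0 Hcj0]].
    set (c := rsum m (indP C)).
    assert (Hc1 : 1 <= c).
    { apply rsum_ind_ge1. destruct (proj1 (Hs t (pl t) Htp (Hpl t Htp)) Ht) as [i [Hi Hti]].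
      exists i. split; auto. exists 0%nat. unfold layer. simpl.
      apply andb_true_intro. split; [apply Nat.ltb_lt; auto|].
      unfold Rleb. destruct (Rle_dec _ _); auto. }
    assert (Hpost : forall j, (j < m)%nat -> s j t <= pl t' j).
    { intros j Hj. apply (proj1 (leftlim_bounds m theta v s D spk t t' j (pl t' j) Hd Hs Hl (Hv j Hj) ltac:(lra) Htt' Hj
        Hn (Hpl t' ltac:(lra) j Hj))). }
    assert (Hpostth : forall j, (j < m)%nat -> s j t <= theta j).
    { intros j Hj. apply Rle_trans with (pl t' j); [apply Hpost; auto|]. apply (proj2 (leftlim_bounds m theta v s D spk t t' j (pl t' j) Hd Hs Hl (Hv j Hj) ltac:(lra) Htt' Hj
        Hn (Hpl t' ltac:(lra) j Hj))). }
    assert (Hout : forall j, (j < m)%nat -> ~ C j -> pl t j + Dm * c <= s j t).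
    { intros j Hj Hcj. destruct (Hjmp t (pl t) Ht (Hpl t Htp) j Hj) as [_ H2].
      simpl in H2. rewrite (H2 Hcj).
      assert (Dm * c <= rsum m (fun i =>
          if ClassicalDescription.excluded_middle_informative (in_coalition m theta Delta (pl t) i /\ i <> j)
          then Delta i j else 0)).
      { unfold c. replace (Dm * rsum m (indP C)) with
          (rsum m (fun i => if ClassicalDescription.excluded_middle_informative (C i) then Dm else 0))
          by (rewrite rsum_if; ring).
        apply rsum_le. intros i Hi.
        destruct (ClassicalDescription.excluded_middle_informative (C i)) as [Hci|Hci];
        destruct (ClassicalDescription.excluded_middle_informative (in_coalition m theta Delta (pl t) i /\ i <> j)) as [Hx|Hx].
        - apply min_Delta_le; auto. apply Hx.
        - exfalso. apply Hx. split; auto. intro; subst; contradiction.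
        - exfalso. apply Hci. apply Hx.
        - lra. }
      lra. }
    assert (HcK : Dm * c <= Th).
    { assert (H1 := Hout j0 Hj0 Hcj0). assert (H2 := Hpostth j0 Hj0).
      assert (H3 := F1 t j0 Ht Hj0). assert (H4 := max_theta_ge m theta j0 Hj0). fold Th in H4. lra. }
    assert (Hsum : rsum m (fun j => pl t j + (if ClassicalDescription.excluded_middle_informative (C j) then - Th else Dm * c))
                   <= rsum m (pl t')).
    { apply rsum_le. intros j Hj. apply Rle_trans with (s j t); [|apply Hpost; auto].
      destruct (ClassicalDescription.excluded_middle_informative (C j)) as [Hcj|Hcj].
      - destruct (Hjmp t (pl t) Ht (Hpl t Htp) j Hj) as [H1 _]. simpl in H1. rewrite (H1 Hcj).
        assert (H3 := F2 t j Ht Hj). assert (H4 := max_theta_ge m theta j Hj). fold Th in H4. lra.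
      - apply Hout; auto. }
    rewrite rsum_plus, rsum_if in Hsum. fold c in Hsum.
    assert (c * (Dm * (INR m - c) - Th) >= delta).
    { assert (Dm * (INR m - c) - Th >= delta) by (unfold delta; nra). nra. }
    nra. }
  assert (Hk : forall k : nat, exists t, T < t /\ spk t /\ INR k * delta <= rsum m (pl t)).
  { induction k as [|k IH].
    - destruct (Hinf T) as [t [HTt Ht]]. exists t. split; auto. split; auto. simpl.
      replace (0 * delta) with (rsum m (fun _ => 0)) by (rewrite rsum_const; ring).
      apply rsum_le. intros i Hi. apply F1; auto.
    - destruct IH as [t [HTt [Ht Hk]]]. destruct (Hstep t HTt Ht) as [t' [HT' [Ht' Hs2]]].
      exists t'. split; auto. split; auto. rewrite S_INR. lra. }
  destruct (INR_archimed delta (rsum m theta) Hdelta) as [k Hk2].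
  destruct (Hk k) as [t [HTt [Ht Hkt]]].
  assert (rsum m (pl t) <= rsum m theta) by (apply rsum_le; intros; apply F2; auto).
  lra.
Qed.
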